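(* Let $A\in\mathbb{R}^{m\times n}$, $X\in\mathbb{R}^{n\times r}$ and $Y\in\mathbb{R}^{m\times r}$ satisfy $AX=Y$, where $\|X\|_0=k$ and the columns of $Y$ are linearly independent. Let $Q$ be a matrix whose columns form a basis of the orthogonal complement $R(Y)^\perp\subset\mathbb{R}^m$ of the column space of $Y$. Suppose $A$ satisfies the restricted isometry condition $0\leq \delta^L_{2k-r+1}(A)<1$. Then $$k-r=\min_{I\subset\{1,\dots,n\},\ |I|\geq k}\operatorname{rank}\left(Q^*A_I\right),$$ and $$\operatorname{supp}X=\arg\min_{I\subset\{1,\dots,n\},\ |I|\geq k}\operatorname{rank}\left(Q^*A_I\right),$$ i.e. $\operatorname{supp}X$ is the index set attaining this minimum.
   Context: For a matrix $X\in\mathbb{R}^{n\times r}$ with rows $\mathbf{x}^1,\dots,\mathbf{x}^n$, $\operatorname{supp}X=\{1\le i\le n:\mathbf{x}^i\neq 0\}$ is the set of indices of nonzero rows and $\|X\|_0=|\operatorname{supp}X|$. For an index set $I\subset\{1,\dots,n\}$, $A_I$ denotes the submatrix of $A$ consisting of the columns indexed by $I$. $R(Y)$ denotes the column space (range) of $Y$, and $Q^*$ denotes the (conjugate) transpose of $Q$. The condition $0\leq\delta^L_{s}(A)<1$ means that there is a left RIP constant $\delta^L_s\in[0,1)$ with $(1-\delta^L_s)\|\mathbf{x}\|^2\leq\|A\mathbf{x}\|^2$ for all $\mathbf{x}\in\mathbb{R}^n$ with at most $s$ nonzero entries; here $s=2k-r+1$. *)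

(* Defs.v *)
From HB Require Import structures.
From mathcomp Require Import all_boot all_order all_algebra.
Set Implicit Arguments. Unset Strict Implicit. Unset Printing Implicit Defensive.
Import Order.TTheory GRing.Theory Num.Theory.
Local Open Scope ring_scope.

Definition supp (R : ringType) (n r : nat) (X : 'M[R]_(n, r)) : {set 'I_n} :=
  [set i | row i X != 0].

Definition norm0 (R : ringType) (n r : nat) (X : 'M[R]_(n, r)) : nat :=
  #|supp X|.

Definition colsubset (R : ringType) (m n : nat) (A : 'M[R]_(m, n)) (I : {set 'I_n})
  : 'M[R]_(m, #|I|) :=
  colsub (fun j : 'I_#|I| => enum_val j) A.

Definition sqnorm (R : ringType) (n : nat) (x : 'cV[R]_n) : R :=
  \sum_(i < n) x i 0 ^+ 2.

Definition left_RIP (R : realFieldType) (m n : nat) (A : 'M[R]_(m, n)) (s : nat) : Prop :=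
  exists delta : R, 0 <= delta /\ delta < 1 /\
    forall x : 'cV[R]_n, (norm0 x <= s)%N ->
      (1 - delta) * sqnorm x <= sqnorm (A *m x).

(* Main.v *)
Require Import Defs.
From HB Require Import structures.
From mathcomp Require Import all_boot all_order all_algebra.
From mathcomp Require Import zify.
Import Order.TTheory GRing.Theory Num.Theory.
Local Open Scope ring_scope.
Set Implicit Arguments. Unset Strict Implicit.

Section Aux.
Variable R : fieldType.
Variable n : nat.

Definition Fm (I : {set 'I_n}) : 'M[R]_(#|I|, n) :=
  \matrix_(t, j) ((enum_val t == j)%:R).

Lemma colsubsetE m (A : 'M[R]_(m, n)) I : colsubset A I = A *m (Fm I)^T.
Proof.
apply/matrixP => i t; rewrite !mxE (bigD1 (enum_val t)) //= big1 ?addr0.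
  by rewrite !mxE eqxx mulr1.
by move=> j hj; rewrite !mxE eq_sym (negPf hj) mulr0.
Qed.

Lemma Fm_sub (I : {set 'I_n}) (x : 'rV[R]_n) :
  (x <= Fm I)%MS <-> (forall j, j \notin I -> x 0 j = 0).
Proof.
split.
  move=> /submxP [w ->] j jI; rewrite !mxE big1 // => t _.
  rewrite !mxE; case: eqP => [e|_]; last by rewrite mulr0.
  by move: (enum_valP t); rewrite e (negPf jI).
move=> H; rewrite [x]row_sum_delta; apply: summx_sub => j _.
case jI: (j \in I); last by rewrite H ?jI // scale0r sub0mx.
apply: scalemx_sub.
have -> : delta_mx 0 j = row (enum_rank_in jI j) (Fm I) :> 'rV[R]_n.
  apply/matrixP => a b; rewrite !mxE (enum_rankK_in jI jI) ord1 eqxx /=.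
  by rewrite eq_sym.
exact: row_sub.
Qed.

Lemma Fm_rank (I : {set 'I_n}) : \rank (Fm I) = #|I|.
Proof.
apply/eqP; rewrite eqn_leq rank_leq_row /=.
apply: leq_trans (_ : \rank (1%:M : 'M[R]_#|I|) <= _)%N; first by rewrite mxrank1.
have -> : (1%:M : 'M[R]_#|I|) = Fm I *m (Fm I)^T.
  apply/matrixP => a b; rewrite !mxE (bigD1 (enum_val a)) //= big1 ?addr0.
    by rewrite !mxE eqxx mul1r (inj_eq enum_val_inj) eq_sym.
  by move=> j hj; rewrite !mxE eq_sym (negPf hj) mul0r.
exact: mxrankM_maxl.
Qed.

Lemma Fm_subS (I J : {set 'I_n}) : I \subset J -> (Fm I <= Fm J)%MS.
Proof.
move=> IJ; apply/row_subP => t; apply/Fm_sub => j jJ.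
by move: (row_sub t (Fm I)) => /Fm_sub ->//; apply: contra jJ; apply: (subsetP IJ).
Qed.

End Aux.
Arguments Fm {R n} I.
Arguments Fm_rank {R n} I.
Arguments Fm_sub {R n} I x.
Arguments Fm_subS {R n} I J.

Lemma subset_card_ex n (T : {set 'I_n}) c : (c <= #|T|)%N ->
  exists T' : {set 'I_n}, T' \subset T /\ #|T'| = c.
Proof.
move=> cT; exists [set x : 'I_n | x \in take c (enum T)]; split.
  by apply/subsetP => x; rewrite inE => /mem_take; rewrite mem_enum.
rewrite cardsE (card_uniqP _) ?take_uniq ?enum_uniq // size_take -cardE.
by rewrite ltn_neqAle cT andbT; case: eqP.
Qed.

Theorem theorem1 (R : realFieldType) (m n r k p : nat)
    (A : 'M[R]_(m, n)) (X : 'M[R]_(n, r)) (Y : 'M[R]_(m, r)) (Q : 'M[R]_(m, p)) :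
  A *m X = Y ->
  norm0 X = k ->
  \rank Y = r ->
  (* the columns of Q form a basis of R(Y)^perp *)
  \rank Q = p ->
  (forall v : 'cV[R]_m, (exists c : 'cV[R]_p, v = Q *m c) <-> Y^T *m v = 0) ->
  left_RIP A (2 * k + 1 - r) ->
  (* k - r is the minimum of rank (Q^* A_I) over |I| >= k ... *)
  ((forall I : {set 'I_n}, (k <= #|I|)%N -> (k - r <= \rank (Q^T *m colsubset A I))%N) /\
   (exists I : {set 'I_n}, (k <= #|I|)%N /\ \rank (Q^T *m colsubset A I) = (k - r)%N)) /\
  (* ... and supp X is exactly the set of minimizers *)
  (forall I : {set 'I_n}, (k <= #|I|)%N ->
     (\rank (Q^T *m colsubset A I) = (k - r)%N <-> I = supp X)).
Proof.
move=> hAX hk hY hQ hQY [d [d0 [d1 hRIP]]].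
set s := (2 * k + 1 - r)%N.
set S := supp X.
have hS : #|S| = k by [].
set M := A^T *m Q.
have rkM : forall I : {set 'I_n}, \rank (Q^T *m colsubset A I) = \rank (Fm I *m M).
  move=> I; rewrite colsubsetE -mxrank_tr !trmx_mul !trmxK /M mulmxA //.
pose D I := (Fm I :&: kermx M)%MS.
have rkE : forall I : {set 'I_n}, \rank (Fm I *m M) = (#|I| - \rank (D I))%N.
  move=> I; have := mxrank_mul_ker (Fm I) M; rewrite (Fm_rank I) /D; lia.
have YQ0 : Y^T *m Q = 0.
  apply/matrixP => i j; rewrite mxE.
  have := (proj1 (hQY (Q *m delta_mx j 0))) (ex_intro _ _ erefl).
  move/(congr1 (fun B : 'cV[R]_r => B i 0)).
  by rewrite mulmxA -colE !mxE.
have hp : p = (m - r)%N.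
  have e : (Q^T == kermx Y)%MS.
    apply/andP; split.
      by apply/sub_kermxP; rewrite -[Y]trmxK -trmx_mul YQ0 trmx0.
    apply/row_subP => i; set x := row i _.
    have /sub_kermxP xY : (x <= kermx Y)%MS by apply: row_sub.
    have : Y^T *m x^T = 0 by rewrite -trmx_mul xY trmx0.
    move/hQY => [c hc]; apply/submxP; exists c^T.
    by rewrite -trmx_mul -hc trmxK.
  by rewrite -hQ -mxrank_tr (eqmx_rank e) mxrank_ker hY.
have rm : (r <= m)%N by rewrite -hY -mxrank_tr rank_leq_col.
have eqKY : (kermx Q :=: Y^T)%MS.
  have YK : (Y^T <= kermx Q)%MS by apply/sub_kermxP.
  apply/eqmxP; apply/andP; split => //.
  rewrite -(mxrank_leqif_sup YK).2 mxrank_ker mxrank_tr hY hQ hp.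
  by rewrite subKn.
have KY : forall k' (B : 'M[R]_(k', n)), (B <= kermx M)%MS = (B *m A^T <= Y^T)%MS.
  move=> k' B; rewrite -eqKY; apply/sub_kermxP/sub_kermxP;
  by rewrite /M mulmxA.
have XF : (X^T <= Fm S)%MS.
  apply/row_subP => i; apply/Fm_sub => j; rewrite inE negbK => /eqP hj.
  by rewrite !mxE; have := congr1 (fun B : 'rV[R]_r => B 0 i) hj; rewrite !mxE.
have rX : \rank X^T = r.
  apply/eqP; rewrite eqn_leq rank_leq_row /= mxrank_tr -{1}hY -hAX.
  exact: mxrankM_maxr.
have rk : (r <= k)%N.
  by rewrite -rX -hS -(@Fm_rank R n S); apply: mxrankS.
have inj : forall (I : {set 'I_n}) w (W : 'M[R]_(w, n)), (W <= Fm I)%MS -> (#|I| <= s)%N ->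
    \rank (W *m A^T) = \rank W.
  move=> I w W WF Is; rewrite -(mxrank_mul_ker W A^T).
  suff -> : (W :&: kermx A^T)%MS = 0 by rewrite mxrank0 addn0.
  apply/row_matrixP => i; rewrite row0; set x := row i _.
  have xF : (x <= Fm I)%MS.
    by apply: submx_trans WF; apply: submx_trans (capmxSl _ _); apply: row_sub.
  have /sub_kermxP xK : (x <= kermx A^T)%MS.
    by apply: submx_trans (capmxSr W _); apply: row_sub.
  have xF' := proj1 (Fm_sub _ _) xF.
  have hn : (norm0 x^T <= s)%N.
    apply: leq_trans Is; apply: subset_leq_card; apply/subsetP => j.
    rewrite inE; apply: contraR => jI; apply/eqP/rowP => b.
    rewrite !mxE; have := xF' j jI; rewrite /x mxE => h; exact: h.
  have := hRIP _ hn.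
  have -> : A *m x^T = 0 by rewrite -[A]trmxK -trmx_mul xK trmx0.
  have -> : sqnorm (0 : 'cV[R]_m) = 0 by rewrite /sqnorm big1 // => j _; rewrite mxE expr0n.
  rewrite pmulr_rle0 ?subr_gt0 // => hle.
  have h0 : sqnorm x^T = 0.
    apply/eqP; rewrite eq_le hle /sqnorm sumr_ge0 // => j _; exact: sqr_ge0.
  apply/rowP => j.
  rewrite /sqnorm in h0; clear xF xF' hn WF Is; have := psumr_eq0P (fun (l : 'I_n) (_ : true) => sqr_ge0 (x^T l 0)) h0; move/(_ j isT).
  move=> /eqP; rewrite sqrf_eq0 => /eqP; by rewrite !mxE => ->.
have rkDle : forall I : {set 'I_n}, (#|I| <= s)%N -> (\rank (D I) <= r)%N.
  move=> I Is; rewrite -(inj I _ (D I) (capmxSl _ _) Is) -hY -(mxrank_tr Y).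
  by apply: mxrankS; rewrite -KY capmxSr.
have XD : (X^T <= D S)%MS.
  by rewrite sub_capmx XF KY -trmx_mul hAX submx_refl.
have ks : (k <= s)%N by rewrite /s; lia.
have rkDS : \rank (D S) = r.
  apply/eqP; rewrite eqn_leq rkDle ?hS //= -{1}rX; exact: mxrankS.
have mono : forall I J : {set 'I_n}, I \subset J -> (\rank (Fm I *m M) <= \rank (Fm J *m M))%N.
  by move=> I J IJ; apply/mxrankS/submxMr/Fm_subS.
have lowJ : forall (J : {set 'I_n}) c, #|J| = c -> (c <= s)%N -> (c - r <= \rank (Fm J *m M))%N.
  by move=> J c cJ Js; rewrite rkE; have := rkDle J; rewrite cJ => /(_ Js); lia.
split; [split|].
- move=> I kI; rewrite rkM.
  have [J [JI cJ]] := subset_card_ex kI.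
  exact: leq_trans (lowJ J k cJ ks) (mono _ _ JI).
- by exists S; split; [rewrite hS | rewrite rkM rkE rkDS hS].
move=> I kI; split; last by move=> ->; rewrite rkM rkE rkDS hS.
rewrite rkM => hI.
case: (ltnP k #|I|) => kI'.
  have [J [JI cJ]] := subset_card_ex kI'.
  have := mono _ _ JI; have := lowJ J _ cJ; rewrite hI.
  have ks1 : (k.+1 <= s)%N by rewrite /s; lia.
  move=> /(_ ks1); lia.
have cI : #|I| = k by apply/eqP; rewrite eqn_leq kI' kI.
have rDI : \rank (D I) = r.
  have := rkDle I; rewrite cI => /(_ ks); move: hI; rewrite rkE cI; lia.
set T := I :|: S.
have [T' [T'T cT']] := subset_card_ex (geq_minl #|T| s).
set U := (D I + X^T)%MS.
have UF : (U <= Fm T)%MS.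
  rewrite addsmx_sub; apply/andP; split.
    by apply: submx_trans (capmxSl _ _) _; apply: Fm_subS; apply: subsetUl.
  by apply: submx_trans XF _; apply: Fm_subS; apply: subsetUr.
have UY : (U *m A^T <= Y^T)%MS.
  rewrite addsmxMr addsmx_sub -KY capmxSr /= -trmx_mul hAX submx_refl //.
set Z := (U :&: Fm T')%MS.
have rZ : (\rank Z <= r)%N.
  rewrite -(inj T' _ Z (capmxSr _ _)); last by rewrite cT' geq_minr.
  rewrite -hY -(mxrank_tr Y); apply: mxrankS; apply: submx_trans UY.
  by apply: submxMr; apply: capmxSl.
have e1 := mxrank_sum_cap U (Fm T'); rewrite (@Fm_rank R n T') -/Z in e1.
have e2 : (\rank (U + Fm T') <= #|T|)%N.
  rewrite -(@Fm_rank R n T); apply: mxrankS; rewrite addsmx_sub UF /=.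
  exact: Fm_subS.
have e4 := mxrank_sum_cap (D I) X^T; rewrite -/U rDI rX in e4.
set j := \rank (D I :&: X^T)%MS in e4.
have jr : (j <= r)%N by rewrite -rX; apply: mxrankS; apply: capmxSr.
have jIS : (j <= #|I :&: S|)%N.
  rewrite -(@Fm_rank R n (I :&: S)); apply: mxrankS; apply/row_subP => i.
  apply/Fm_sub => l; rewrite inE negb_and => hl.
  have h1 : (row i (D I :&: X^T)%MS <= Fm I)%MS.
    by apply: submx_trans (row_sub _ _) _; apply: submx_trans (capmxSl _ _) _; apply: capmxSl.
  have h2 : (row i (D I :&: X^T)%MS <= Fm S)%MS.
    by apply: submx_trans (row_sub _ _) _; apply: submx_trans (capmxSr _ _) _.
  by case/orP: hl => hl; [apply: (proj1 (Fm_sub _ _) h1) | apply: (proj1 (Fm_sub _ _) h2)].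
have eU := cardsUI I S; rewrite -/T cI hS in eU.
case: (leqP #|T| s) => Ts; last first.
  by move: cT'; rewrite (minn_idPr (ltnW Ts)) => cT'; exfalso; lia.
move: cT'; rewrite (minn_idPl Ts) => cT'.
have jeq : j = r by lia.
have XDI : (X^T <= D I)%MS.
  have hc : (D I :&: X^T <= X^T)%MS := capmxSr _ _.
  apply: submx_trans (capmxSl (D I) X^T).
  by rewrite -(mxrank_leqif_sup hc).2 -/j jeq rX.
have XI : (X^T <= Fm I)%MS := submx_trans XDI (capmxSl _ _).
have SI : S \subset I.
  apply/subsetP => i iS; apply/negPn/negP => iI.
  move: iS; rewrite inE => /eqP; apply; apply/rowP => c.
  have := proj1 (Fm_sub I (row c X^T)) (submx_trans (row_sub c X^T) XI) i iI.
  by rewrite !mxE.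
by apply/esym/eqP; rewrite eqEcard SI cI hS leqnn.
Qed.
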